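(* Let $K$ be a field of characteristic not equal to $2$ and let $S$ be a (unital, not necessarily associative) $K$-algebra with a pseudo-degree function $\chi$. Let $a\in N(S)$ be such that $C_S(a)$ satisfies condition $D(\ell)$ for some $\ell>0$, and let $b\in C_S(a)\cap N_l(S)$. Then there exists a nonzero polynomial $P(s,t)\in K[s,t]$ such that $P(a,b)=0$, where for $P(s,t)=\sum_{i=0}^k f_i(s)t^i$ with $f_i\in K[s]$ one sets $P(a,b)=\sum_{i=0}^k f_i(a)b^i$.
   Context: All algebras are unital but not necessarily associative, and $K$ is embedded in $S$ via the unit. $N_l(S)$ is the set of $x\in S$ with $x(yz)=(xy)z$ for all $y,z\in S$ (so powers of an element of $N_l(S)$ are well defined). The nucleus $N(S)$ is the set of $x\in S$ with $x(yz)=(xy)z$, $(yx)z=y(xz)$ and $(yz)x=y(zx)$ for all $y,z\in S$. $C_S(a)$ denotes the set of elements of $S$ commuting with $a$. A pseudo-degree function on $S$ is a map $\chi:S\to\mathbb{Z}\cup\{-\infty\}$ such that $\chi(x)=-\infty$ iff $x=0$; $\chi(xy)=\chi(x)+\chi(y)$; and $\chi(x+y)\le\max(\chi(x),\chi(y))$ for all $x,y\in S$. For a positive integer $\ell$, a subalgebra $B\subseteq S$ satisfies condition $D(\ell)$ if $\chi(x)\ge0$ for all nonzero $x\in B$, and whenever $b_1,\dots,b_{\ell+1}\in B$ all have the same value under $\chi$, there exist $\alpha_1,\dots,\alpha_{\ell+1}\in K$, not all zero, with $\chi\left(\sum_{i=1}^{\ell+1}\alpha_ib_i\right)<\chi(b_1)$.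 *)

(* Defs.v *)
From HB Require Import structures.
From mathcomp Require Import all_boot all_order all_algebra.
Set Implicit Arguments. Unset Strict Implicit. Unset Printing Implicit Defensive.
Import Order.TTheory GRing.Theory Num.Theory.
Local Open Scope ring_scope.

Section NonAssoc.
Variables (K : fieldType) (S : lmodType K) (mul : S -> S -> S) (one : S).

Definition is_unital_algebra : Prop :=
  [/\ forall (k : K) (x y z : S), mul (k *: x + y) z = k *: mul x z + mul y z,
      forall (k : K) (x y z : S), mul x (k *: y + z) = k *: mul x y + mul x z,
      forall x, mul one x = x
    & forall x, mul x one = x].

Definition left_nucleus (x : S) : Prop :=
  forall y z, mul x (mul y z) = mul (mul x y) z.

Definition nucleus (x : S) : Prop :=
  forall y z, [/\ mul x (mul y z) = mul (mul x y) z,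
                  mul (mul y x) z = mul y (mul x z)
                & mul (mul y z) x = mul y (mul z x)].

Definition centralizer (a : S) : pred S := fun x => mul x a == mul a x.

(* powers: x^0 = 1, x^(n+1) = x * x^n (well defined for x in N_l(S)) *)
Fixpoint npow (x : S) (n : nat) : S :=
  if n is n'.+1 then mul x (npow x n') else one.

Definition peval1 (f : {poly K}) (a : S) : S :=
  \sum_(j < size f) f`_j *: npow a j.

(* P(a,b) = sum_i f_i(a) b^i for P = sum_i f_i(s) t^i in K[s][t] = K[s,t] *)
Definition peval2 (P : {poly {poly K}}) (a b : S) : S :=
  \sum_(i < size P) mul (peval1 P`_i a) (npow b i).

End NonAssoc.

(* Z ∪ {-oo}, encoded as option int with None = -oo *)
Definition zbot := option int.
Definition zle (x y : zbot) : bool :=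
  match x, y with
  | None, _ => true
  | Some _, None => false
  | Some m, Some n => (m <= n)%R
  end.
Definition zlt (x y : zbot) : bool := zle x y && (x != y).
Definition zmax (x y : zbot) : zbot := if zle x y then y else x.
Definition zadd (x y : zbot) : zbot :=
  match x, y with
  | Some m, Some n => Some (m + n)%R
  | _, _ => None
  end.

Section PseudoDeg.
Variables (K : fieldType) (S : lmodType K) (mul : S -> S -> S).

Definition pseudo_degree (chi : S -> zbot) : Prop :=
  [/\ forall x, chi x = None <-> x = 0,
      forall x y, chi (mul x y) = zadd (chi x) (chi y)
    & forall x y, zle (chi (x + y)) (zmax (chi x) (chi y))].

Definition condD (chi : S -> zbot) (B : pred S) (l : nat) : Prop :=
  (forall x, x \in B -> x != 0 -> zle (Some 0%R) (chi x)) /\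
  (forall bs : 'I_l.+1 -> S,
     (forall i, bs i \in B) -> (forall i, bs i != 0) ->
     (forall i, chi (bs i) = chi (bs ord0)) ->
     exists alpha : 'I_l.+1 -> K, (exists i, alpha i != 0) /\
       zlt (chi (\sum_i alpha i *: bs i)) (chi (bs ord0))).
End PseudoDeg.

(* Main.v *)
Require Import Defs.
From HB Require Import structures.
From mathcomp Require Import all_boot all_order all_algebra.
From mathcomp Require Import zify.
Set Implicit Arguments. Unset Strict Implicit.
Import GRing.Theory.
Local Open Scope ring_scope.

Section Gen.
Variables (K : fieldType) (S : lmodType K) (chi : S -> zbot) (B : pred S) (l : nat).
Hypothesis chi0 : forall x, chi x = None <-> x = 0.
Hypothesis B0 : 0 \in B.
Hypothesis BL : forall k x y, x \in B -> y \in B -> k *: x + y \in B.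
Hypothesis HD : condD chi B l.

Definition rel_ok (I : finType) (v : I -> S) (P : {set I}) :=
  exists c : I -> K, (exists2 i, i \in P & c i != 0) /\ \sum_(i in P) c i *: v i = 0.

Lemma BD x y : x \in B -> y \in B -> x + y \in B.
Proof. by move=> hx hy; rewrite -(scale1r x); apply: BL. Qed.

Lemma BZ k x : x \in B -> k *: x \in B.
Proof. by move=> hx; rewrite -[k *: x]addr0; apply: BL. Qed.

Lemma Bsum (I : finType) (P : pred I) (F : I -> S) :
  (forall i, P i -> F i \in B) -> \sum_(i | P i) F i \in B.
Proof. by move=> h; apply: (big_ind (fun x => x \in B)) => //; apply: BD. Qed.

Lemma small (d : nat) :
  (forall (I : finType) (v : I -> S) (P : {set I}),
     (forall i, i \in P -> v i \in B) ->
     (forall i, i \in P -> zle (chi (v i)) (Some d%:Z) && (chi (v i) != Some d%:Z)) ->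
     (l * d < #|P|)%N -> rel_ok v P) ->
  forall (I : finType) (v : I -> S) (P : {set I}),
     (forall i, i \in P -> v i \in B) ->
     (forall i, i \in P -> zle (chi (v i)) (Some d%:Z)) ->
     (#|[set i in P | chi (v i) == Some d%:Z]| <= l)%N ->
     (l * d.+1 < #|P|)%N -> rel_ok v P.
Proof.
move=> Hlow I v P HB Hd; set T := [set i in P | _] => Hs Hc.
have TP : T \subset P by apply/subsetP => i; rewrite inE => /andP[].
have [c [[i iP ci] cs]] : rel_ok v (P :\: T).
  apply: Hlow.
- by move=> i; rewrite inE => /andP[_ /HB].
- move=> i; rewrite !inE => /andP[iT iP]; rewrite Hd //=.
  by move: iT; rewrite iP.
- rewrite cardsD (setIidPr TP); lia.

exists (fun i => if i \in P :\: T then c i else 0); split.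
  by exists i; [move: iP; rewrite inE => /andP[] | rewrite iP].
rewrite -[RHS]cs [RHS]big_mkcond [LHS]big_mkcond; apply: eq_bigr => j _.
case: (boolP (j \in P :\: T)) => jPT; case: (boolP (j \in P)) => jP //=; rewrite ?scale0r //.
by move: jPT; rewrite inE (negbTE jP) andbF.
Qed.

Lemma replace (d : nat) (I : finType) (v : I -> S) (P : {set I}) :
  (forall i, i \in P -> v i \in B) ->
  (forall i, i \in P -> zle (chi (v i)) (Some d%:Z)) ->
  (l < #|[set i in P | chi (v i) == Some d%:Z]|)%N ->
  (forall v' : I -> S, (forall i, i \in P -> v' i \in B) ->
     (forall i, i \in P -> zle (chi (v' i)) (Some d%:Z)) ->
     (#|[set i in P | chi (v' i) == Some d%:Z]| < #|[set i in P | chi (v i) == Some d%:Z]|)%N ->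
     rel_ok v' P) ->
  rel_ok v P.
Proof.
move=> HB Hd; set T := [set i in P | _] => Hl IH.
have TP : T \subset P by apply/subsetP => i; rewrite inE => /andP[].
pose f (k : 'I_l.+1) : I := enum_val (widen_ord Hl k).
have fT k : f k \in T by apply: enum_valP.
have fP k : f k \in P by apply: (subsetP TP).
have finj : injective f by move=> x y /enum_val_inj [] /val_inj.
have fd k : chi (v (f k)) = Some d%:Z by move: (fT k); rewrite inE => /andP[_ /eqP].
have [_ HD2] := HD.
have [|||alpha [[k0 ak0] Hlt]] := HD2 (fun k => v (f k)).
- by move=> k; apply: HB.
- by move=> k; apply/eqP => /(proj2 (chi0 _)); rewrite fd.
- by move=> k; rewrite !fd.
rewrite fd in Hlt.
set w := \sum_k alpha k *: v (f k) in Hlt.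
set i0 := f k0.
pose v' i := if i == i0 then w else v i.
have wB : w \in B by apply: Bsum => k _; apply/BZ/HB.
have [beta [[i1 i1P bi1] bs]] : rel_ok v' P.
  apply: IH.
  - by move=> i iP; rewrite /v'; case: ifP => _; [exact: wB | exact: HB].
  - move=> i iP; rewrite /v'; case: ifP => _; last exact: Hd.
    by move: Hlt => /andP[].
  - apply: proper_card; apply/properP; split.
      apply/subsetP => i; rewrite !inE /v' => /andP[-> /=].
      by case: ifP => // /eqP ->; move: Hlt => /andP[_ /negbTE ->].
    exists i0; first exact: fT.
    by rewrite !inE /v' eqxx; move: Hlt => /andP[_ /negbTE ->]; rewrite andbF.
pose alpha' i := \sum_k (if f k == i then alpha k else 0).
have a'i0 : alpha' i0 = alpha k0.
  rewrite /alpha' (bigD1 k0) //= eqxx big1 ?addr0 // => k kk0.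
  by rewrite (inj_eq finj) (negbTE kk0).
have a'sum : \sum_(i in P) alpha' i *: v i = w.
  rewrite /w.
  under eq_bigr do rewrite scaler_suml.
  rewrite exchange_big /=; apply: eq_bigr => k _.
  rewrite (bigD1 (f k)) ?fP //= eqxx big1 ?addr0 // => i /andP[_ ne].
  by rewrite eq_sym (negbTE ne) scale0r.
exists (fun i => (if i == i0 then 0 else beta i) + beta i0 * alpha' i); split.
  have [b0|b0] := eqVneq (beta i0) 0.
    exists i1 => //; rewrite b0 mul0r addr0; case: ifP => // /eqP e.
    by move: bi1; rewrite e b0 eqxx.
  exists i0; first exact: fP.
  by rewrite eqxx add0r a'i0 mulf_neq0.
under eq_bigr do rewrite scalerDl.
rewrite big_split /=.
under [X in _ + X]eq_bigr do rewrite -scalerA.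
rewrite -scaler_sumr a'sum -[RHS]bs.
rewrite (bigD1 i0 (fP k0)) /= (bigD1 i0 (fP k0)) /=.
rewrite /v' !eqxx scale0r add0r addrC; congr (_ + _).
by apply: eq_bigr => i /andP[_ /negbTE ->].
Qed.

Lemma stepd (d : nat) :
  (forall (I : finType) (v : I -> S) (P : {set I}),
     (forall i, i \in P -> v i \in B) ->
     (forall i, i \in P -> zle (chi (v i)) (Some d%:Z) && (chi (v i) != Some d%:Z)) ->
     (l * d < #|P|)%N -> rel_ok v P) ->
  forall (I : finType) (v : I -> S) (P : {set I}),
     (forall i, i \in P -> v i \in B) ->
     (forall i, i \in P -> zle (chi (v i)) (Some d%:Z)) ->
     (l * d.+1 < #|P|)%N -> rel_ok v P.
Proof.
move=> Hlow I v P HB Hd Hc.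
suff h : forall t (v : I -> S), (#|[set i in P | chi (v i) == Some d%:Z]| <= t)%N ->
   (forall i, i \in P -> v i \in B) ->
   (forall i, i \in P -> zle (chi (v i)) (Some d%:Z)) -> rel_ok v P.
  exact: (h _ v (leqnn _)).
elim=> [|t IH] v' Ht HB' Hd'.
  by apply: (small Hlow) => //; lia.
case: (leqP #|[set i in P | chi (v' i) == Some d%:Z]| l) => Hs.
  exact: (small Hlow).
apply: (@replace d) => // v'' HB'' Hd'' Hlt; apply: IH => //.
lia.
Qed.

Lemma dimbound (d : nat) (I : finType) (v : I -> S) (P : {set I}) :
  (forall i, i \in P -> v i \in B) ->
  (forall i, i \in P -> zle (chi (v i)) (Some d%:Z)) ->
  (l * d.+1 < #|P|)%N -> rel_ok v P.
Proof.
elim: d I v P => [|d IH] I v P.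
  apply: stepd => {}I {}v {}P HB Hd Hc.
  have [i iP] : exists i, i \in P.
    by apply/set0Pn; rewrite -card_gt0; move: Hc; rewrite muln0.
  have vi0 : v i = 0.
    apply/eqP; apply/negP => /negP nz.
    have := (proj1 HD) _ (HB i iP) nz.
    move: (Hd i iP); case: (chi (v i)) => [m|] //= /andP[h1 h2] h3.
    by move: h2; rewrite (_ : m = 0%:Z) //; apply/eqP; rewrite Order.POrderTheory.eq_le h1 h3.
  exists (fun j => if j == i then 1 else 0); split; first by exists i; rewrite // eqxx oner_neq0.
  rewrite (bigD1 i iP) /= eqxx vi0 scaler0 add0r big1 // => j /andP[_ /negbTE ->].
  by rewrite scale0r.
apply: stepd => {}I {}v {}P HB Hd Hc.
apply: IH => // i iP; move: (Hd i iP); case: (chi (v i)) => [m|] //= /andP[h1 h2].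
have : m != d.+1%:Z by apply: contra h2 => /eqP ->.
move=> h3; lia.
Qed.

End Gen.

Lemma widen_sum (V : zmodType) (F : nat -> V) m n :
  (m <= n)%N -> (forall i, (m <= i)%N -> F i = 0) ->
  \sum_(i < m) F i = \sum_(i < n) F i.
Proof.
move=> mn h; rewrite (big_ord_widen _ _ mn) big_mkcond; apply: eq_bigr => i _.
by case: ifP => // /negbT; rewrite -leqNgt => /h ->.
Qed.

Lemma zle_trans x y z : zle x y -> zle y z -> zle x z.
Proof. by case: x; case: y; case: z => //= ? ? ?; apply: Order.POrderTheory.le_trans. Qed.

Lemma zadd_le x y x' y' : zle x x' -> zle y y' -> zle (zadd x y) (zadd x' y').
Proof. by case: x; case: y; case: x'; case: y' => //= ? ? ? ? h1 h2; apply: Num.Theory.lerD. Qed.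

Section Main.
Variables (K : fieldType) (S : lmodType K) (mul : S -> S -> S) (one : S) (chi : S -> zbot).
Hypothesis HA : is_unital_algebra mul one.
Hypothesis HC : pseudo_degree mul chi.

Lemma mulDl x y z : mul (x + y) z = mul x z + mul y z.
Proof. by case: HA => h _ _ _; have := h 1 x y z; rewrite !scale1r. Qed.
Lemma mulDr x y z : mul z (x + y) = mul z x + mul z y.
Proof. by case: HA => _ h _ _; have := h 1 z x y; rewrite !scale1r. Qed.
Lemma mul0l z : mul 0 z = 0.
Proof. have h := mulDl 0 0 z; rewrite addr0 in h; apply: (addrI (mul 0 z)); by rewrite -h addr0. Qed.
Lemma mul0r z : mul z 0 = 0.
Proof. have h := mulDr 0 0 z; rewrite addr0 in h; apply: (addrI (mul z 0)); by rewrite -h addr0. Qed.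
Lemma mulZl k x z : mul (k *: x) z = k *: mul x z.
Proof. by case: HA => h _ _ _; rewrite -[k *: x]addr0 h mul0l addr0. Qed.
Lemma mulZr k x z : mul z (k *: x) = k *: mul z x.
Proof. by case: HA => _ h _ _; rewrite -[k *: x]addr0 h mul0r addr0. Qed.
Lemma mul_suml (I : Type) (r : seq I) (Pr : pred I) (F : I -> S) z :
  mul (\sum_(i <- r | Pr i) F i) z = \sum_(i <- r | Pr i) mul (F i) z.
Proof. by apply: (big_morph (fun x => mul x z)) => [x y|]; [apply: mulDl | apply: mul0l]. Qed.

Lemma chi_one : zle (chi one) (Some 0%:Z).
Proof.
case: HC => _ hM _; case: HA => _ _ h1 _.
have := hM one one; rewrite h1; case: (chi one) => //= m /= [] e.
have -> : m = 0 by apply: (addrI m); rewrite addr0 -e.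
by [].
Qed.

Lemma chi_npow y (p : nat) i : zle (chi y) (Some p%:Z) -> zle (chi (npow mul one y i)) (Some (i * p)%N%:Z).
Proof.
case: HC => _ hM _ hy; elim: i => [|i IH] /=; first exact: chi_one.
rewrite hM; have := zadd_le hy IH; rewrite /= mulSn PoszD; exact.
Qed.
End Main.

Theorem corollary2p9 (K : fieldType) (S : lmodType K)
  (mul : S -> S -> S) (one : S) (chi : S -> zbot) (a b : S) (l : nat) :
  ~~ (2 \in [pchar K])%N ->
  is_unital_algebra mul one ->
  pseudo_degree mul chi ->
  nucleus mul a ->
  (0 < l)%N ->
  condD chi (centralizer mul a) l ->
  b \in centralizer mul a ->
  left_nucleus mul b ->
  exists P : {poly {poly K}}, P != 0 /\ peval2 mul one P a b = 0.
Proof.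
move=> _ HA HC Ha _ HD Hb _.
have HA' := HA; case: HA' => HL HR H1l H1r.
have HC' := HC; case: HC' => chi0 chiM chiD.
set B := centralizer mul a.
have inB x : (x \in B) = (mul x a == mul a x) by [].
have B0 : 0 \in B by rewrite inB (mul0l HA) (mul0r HA).
have BL k x y : x \in B -> y \in B -> k *: x + y \in B.
  by rewrite !inB HL HR => /eqP -> /eqP ->.
have aB : a \in B by rewrite inB.
have powB y i : y \in B -> npow mul one y i \in B.
  move=> yB; elim: i => [|i IH] /=; first by rewrite inB H1l H1r.
  rewrite inB; have [_ _ e3] := Ha y (npow mul one y i); rewrite e3.
  rewrite (eqP IH); have [_ e2 _] := Ha y (npow mul one y i); rewrite -e2 (eqP yB).
  by have [e1 _ _] := Ha y (npow mul one y i); rewrite e1.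
have prodB x y : x \in B -> y \in B -> mul x y \in B.
  move=> xB yB; rewrite inB; have [e1 e2 e3] := Ha x y.
  rewrite e3 (eqP yB) -e2 (eqP xB) e1 //.
have degnat x : x \in B -> exists p : nat, zle (chi x) (Some p%:Z).
  move=> xB; have [->|nz] := eqVneq x 0.
    by exists 0%N; rewrite (proj2 (chi0 0)).
  have := (proj1 HD) x xB nz; case: (chi x) => [m|] //= m0.
    by exists `|m|%N; rewrite gez0_abs.
have [p hp] := degnat a aB.
have [q hq] := degnat b Hb.
pose N := (l * (p + q) + l)%N.
pose I : finType := ('I_N.+1 * 'I_N.+1)%type.
pose v (x : I) := mul (npow mul one a x.2) (npow mul one b x.1).
have [c [[x0 _ cx0] cs]] : rel_ok v [set: I].
  apply: (dimbound chi0 B0 BL HD (d := (N * (p + q))%N)).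
- by move=> x _; apply: prodB; apply: powB.
- move=> [i j] _; rewrite /v /= chiM.
  apply: zle_trans (zadd_le (chi_npow HA HC j hp) (chi_npow HA HC i hq)) _ => /=.
  have := ltn_ord i; have := ltn_ord j => hj hi; rewrite -PoszD lez_nat; nia.
- rewrite cardsT card_prod card_ord /N; nia.
have {}cs : \sum_(x : I) c x *: v x = 0 by rewrite -[RHS]cs; apply: eq_bigl => x; rewrite in_setT.
pose Pol : {poly {poly K}} := \poly_(i < N.+1) \poly_(j < N.+1) c (inord i, inord j).
have coefP (i j : 'I_N.+1) : Pol`_i`_j = c (i, j).
  rewrite coef_poly ltn_ord coef_poly ltn_ord. by rewrite !inord_val.
exists Pol; split.
  apply/eqP => P0; move: cx0; case: x0 => i j; rewrite -coefP P0 coef0 coef0 eqxx //.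
rewrite /peval2 (@widen_sum _ (fun i => mul (peval1 mul one Pol`_i a) (npow mul one b i)) _ N.+1); last 2 first.
- exact: size_poly.
- by move=> i hi /=; rewrite nth_default // /peval1 size_poly0 big_ord0 (mul0l HA).
rewrite -[RHS]cs (eq_bigr (fun x : I => c (x.1, x.2) *: v (x.1, x.2))); last by case.
rewrite -(pair_bigA _ (fun (i j : 'I_N.+1) => c (i, j) *: v (i, j))) /=; apply: eq_bigr => i _.
rewrite /peval1 (@widen_sum _ (fun j => Pol`_i`_j *: npow mul one a j) _ N.+1); last 2 first.
- by rewrite coef_poly ltn_ord; exact: size_poly.
- by move=> j hj /=; rewrite nth_default // scale0r.
rewrite (mul_suml HA); apply: eq_bigr => j _.
by rewrite (mulZl HA) coefP.
Qed.
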